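(* Let $A_1,A_2\in\mathbb{R}^{n\times n}$ be symmetric positive semidefinite and $\mathcal{A}=(A_1,A_2)$. Then $\mathrm{Opt}(\mathcal{A})=\mathrm{OptSDP}(\mathcal{A})$.
   Context: Here $\mathbb{K}=\mathbb{R}$: $\mathrm{Opt}(\mathcal{A})=\max_{x\in\mathbb{R}^n,\|x\|=1}\big(\prod_{i=1}^d x^TA_ix\big)^{1/d}$ and $\mathrm{OptSDP}(\mathcal{A})=\max\big\{\big(\prod_{i=1}^d\operatorname{Tr}(A_iX)\big)^{1/d}: X\in\mathbb{R}^{n\times n}\text{ symmetric},\ X\succeq0,\ \operatorname{Tr}X=1\big\}$, with $d=2$. *)

(* Defs.v *)
From mathcomp Require Import all_boot all_order all_algebra.
From mathcomp Require Import all_classical all_reals.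
Set Implicit Arguments. Unset Strict Implicit. Unset Printing Implicit Defensive.
Import Order.TTheory GRing.Theory Num.Theory.
Local Open Scope ring_scope.
Local Open Scope classical_set_scope.

Definition symmetric_mx (R : realType) (n : nat) (A : 'M[R]_n) : Prop := A^T = A.

Definition qform (R : realType) (n : nat) (A : 'M[R]_n) (x : 'cV[R]_n) : R :=
  (x^T *m A *m x) 0 0.

Definition psd (R : realType) (n : nat) (A : 'M[R]_n) : Prop :=
  symmetric_mx A /\ forall x : 'cV[R]_n, 0 <= qform A x.

Definition unit_vec (R : realType) (n : nat) (x : 'cV[R]_n) : Prop :=
  (x^T *m x) 0 0 = 1.

(* Opt(A1,A2) = max_{||x||=1} (prod_{i=1}^2 x^T A_i x)^{1/2}
   (the maximum is attained by compactness, so it equals the sup) *)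
Definition Opt2 (R : realType) (n : nat) (A1 A2 : 'M[R]_n) : R :=
  sup [set Num.sqrt (qform A1 x * qform A2 x) | x in [set x | unit_vec x]].

Definition OptSDP2 (R : realType) (n : nat) (A1 A2 : 'M[R]_n) : R :=
  sup [set Num.sqrt (\tr (A1 *m X) * \tr (A2 *m X)) |
        X in [set X : 'M[R]_n | psd X /\ \tr X = 1]].

(* Main.v *)
Require Import Defs.
From mathcomp Require Import all_boot all_order all_algebra.
From mathcomp Require Import all_classical all_reals.
From mathcomp Require Import ring lra.
Import Order.TTheory GRing.Theory Num.Theory.
Set Implicit Arguments. Unset Strict Implicit. Unset Printing Implicit Defensive.
Local Open Scope ring_scope.

Definition bil (R : realType) n (A : 'M[R]_n) (x y : 'cV[R]_n) : R := (x^T *m A *m y) 0 0.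
Definition nrm (R : realType) n (x : 'cV[R]_n) : R := (x^T *m x) 0 0.

Lemma bilDl (R : realType) n (A : 'M[R]_n) (x y z : 'cV[R]_n) (a b : R) :
  bil A (a *: x + b *: y) z = a * bil A x z + b * bil A y z.
Proof. by rewrite /bil !linearD /= !linearZ /= !mulmxDl -!scalemxAl !mxE. Qed.

Lemma bilDr (R : realType) n (A : 'M[R]_n) (x y z : 'cV[R]_n) (a b : R) :
  bil A z (a *: x + b *: y) = a * bil A z x + b * bil A z y.
Proof. by rewrite /bil !mulmxDr -!scalemxAr !mxE. Qed.

Lemma qform_comb (R : realType) n (A : 'M[R]_n) (y z : 'cV[R]_n) (a b : R) : qform A (a *: y + b *: z) =
  a^+2 * qform A y + a * b * (bil A y z + bil A z y) + b^+2 * qform A z.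
Proof. rewrite /qform -/(bil _ _ _) bilDl !bilDr /bil. ring. Qed.

Lemma qformZ (R : realType) n (A : 'M[R]_n) (x : 'cV[R]_n) (c : R) : qform A (c *: x) = c^+2 * qform A x.
Proof.
have -> : c *: x = c *: x + 0 *: x by rewrite scale0r addr0.
rewrite qform_comb; ring.
Qed.

Lemma qform0 (R : realType) n (A : 'M[R]_n) : qform A 0 = 0.
Proof. by rewrite -(scale0r (0 : 'cV[R]_n)) qformZ expr0n mul0r. Qed.

Lemma qformN (R : realType) n (A : 'M[R]_n) (x : 'cV[R]_n) : qform (- A) x = - qform A x.
Proof. by rewrite /qform mulmxN mulNmx mxE. Qed.

Lemma nrmE (R : realType) n (x : 'cV[R]_n) : nrm x = qform 1%:M x.
Proof. by rewrite /nrm /qform mulmx1. Qed.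

Lemma nrm_sum (R : realType) n (x : 'cV[R]_n) : nrm x = \sum_k x k 0 ^+ 2.
Proof. by rewrite /nrm mxE; apply: eq_bigr => k _; rewrite mxE expr2. Qed.

Lemma nrm_ge0 (R : realType) n (x : 'cV[R]_n) : 0 <= nrm x.
Proof. by rewrite nrm_sum; apply: sumr_ge0 => k _; apply: sqr_ge0. Qed.

Lemma nrm_eq0 (R : realType) n (x : 'cV[R]_n) : nrm x = 0 -> x = 0.
Proof.
rewrite nrm_sum => /psumr_eq0P h; apply/matrixP => i j.
rewrite (ord1 j) mxE; have /eqP := h (fun k _ => sqr_ge0 _) i isT.
by rewrite sqrf_eq0 => /eqP.
Qed.

Lemma bil_delta (R : realType) n (A : 'M[R]_n) i j :
  bil A (delta_mx i 0) (delta_mx j 0) = A i j.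
Proof. by rewrite /bil trmx_delta -rowE -colE !mxE. Qed.

Lemma bil_sym (R : realType) n (X : 'M[R]_n) (x y : 'cV[R]_n) : X^T = X -> bil X x y = bil X y x.
Proof.
move=> hX; rewrite /bil.
have e (M : 'M[R]_1) : M 0 0 = M^T 0 0 by rewrite mxE.
by rewrite e !trmx_mul trmxK hX mulmxA.
Qed.

Lemma tr_rank1 (R : realType) n (A : 'M[R]_n) (y : 'cV[R]_n) : \tr (A *m (y *m y^T)) = qform A y.
Proof. by rewrite mulmxA mxtrace_mulC mulmxA /mxtrace big_ord1. Qed.
Lemma realize2 (R : realType) (c s : R) : exists a b : R, a^+2 - b^+2 = c /\ a*b = s.
Proof.
set r := Num.sqrt (c^+2 + 4 * s^+2).
have r0 : 0 <= r by apply: sqrtr_ge0.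
have rr : r^+2 = c^+2 + 4 * s^+2 by rewrite sqr_sqrtr //; nra.
have rc : 0 <= r + c by nra.
have [rc0|rcp] := eqVneq (r + c) 0.
  have s0 : s = 0 by nra.
  exists 0, (Num.sqrt (- c)); rewrite sqr_sqrtr; last by nra.
  split; [lra | by rewrite mul0r s0].
have rcpos : 0 < r + c by rewrite lt_neqAle eq_sym rcp rc.
set a := Num.sqrt ((r + c) / 2).
have a2 : a^+2 = (r + c) / 2 by rewrite sqr_sqrtr //; lra.
have apos : 0 < a by rewrite sqrtr_gt0; lra.
have an0 : a != 0 by rewrite gt_eqF.
exists a, (s / a); split; last by rewrite mulrC divfK.
have s2 : s^+2 = (r + c) * (r - c) / 4 by nra.
rewrite expr_div_n a2 s2; field.
by rewrite gt_eqF.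
Qed.
Lemma planar2 (R : realType) (a1 b1 a2 b2 : R) : exists c s : R,
  (c != 0 \/ s != 0) /\ 0 <= a1 * c + b1 * s /\ 0 <= a2 * c + b2 * s.
Proof.
have [h1|h1] := boolP ((a1 != 0) || (b1 != 0)).
  have nz : (- b1 != 0) \/ (a1 != 0).
    by case/orP: h1 => h; [right | left; rewrite oppr_eq0].
  have [hD|hD] := lerP 0 (a1 * b2 - a2 * b1).
    by exists (- b1), a1; split => //; split; nra.
  exists b1, (- a1); split; last by split; nra.
  by case: nz => h; [left; rewrite -oppr_eq0 | right; rewrite oppr_eq0].
move: h1; rewrite negb_or !negbK => /andP[/eqP -> /eqP ->].
have [h2|h2] := boolP ((a2 != 0) || (b2 != 0)).
  exists a2, b2; split; first by apply/orP.
  by split; nra.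
move: h2; rewrite negb_or !negbK => /andP[/eqP -> /eqP ->].
by exists 1, 0; split; [left; exact: oner_neq0 | split; lra].
Qed.

Lemma two_vec (R : realType) n (A1 A2 : 'M[R]_n) (y z : 'cV[R]_n) :
  exists w : 'cV[R]_n, nrm w = nrm y + nrm z /\
    qform A1 y + qform A1 z <= qform A1 w /\ qform A2 y + qform A2 z <= qform A2 w.
Proof.
set p := nrm y; set q := nrm z; set m := bil 1%:M y z + bil 1%:M z y.
set p1 := qform A1 y; set q1 := qform A1 z; set m1 := bil A1 y z + bil A1 z y.
set p2 := qform A2 y; set q2 := qform A2 z; set m2 := bil A2 y z + bil A2 z y.
have [c [s [cs0 [h1 h2]]]] := @planar2 R (q* p1 - p* q1) ((p+q) * m1 - (p1+q1) * m)
  (q* p2 - p* q2) ((p+q) * m2 - (p2+q2) * m).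
have [a [b [ec es]]] := @realize2 R c s.
set w0 := a *: y + b *: z.
have N0 : nrm w0 = a^+2* p + a*b * m + b^+2* q by rewrite nrmE qform_comb -!nrmE.
have Q1 : qform A1 w0 = a^+2* p1 + a*b * m1 + b^+2* q1 by rewrite qform_comb.
have Q2 : qform A2 w0 = a^+2* p2 + a*b * m2 + b^+2* q2 by rewrite qform_comb.
have k1 : (p1+q1) * nrm w0 <= (p+q) * qform A1 w0.
  rewrite -subr_ge0.
  have -> : (p+q) * qform A1 w0 - (p1+q1) * nrm w0 =
     (q* p1 - p* q1) * c + ((p+q) * m1 - (p1+q1) * m) * s by rewrite N0 Q1 -ec -es; ring.
  exact: h1.
have k2 : (p2+q2) * nrm w0 <= (p+q) * qform A2 w0.
  rewrite -subr_ge0.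
  have -> : (p+q) * qform A2 w0 - (p2+q2) * nrm w0 =
     (q* p2 - p* q2) * c + ((p+q) * m2 - (p2+q2) * m) * s by rewrite N0 Q2 -ec -es; ring.
  exact: h2.
have pq0 : 0 <= p + q by apply: addr_ge0; apply: nrm_ge0.
have [Nz|Npos] := eqVneq (nrm w0) 0; last first.
  have Np : 0 < nrm w0 by rewrite lt_neqAle eq_sym Npos nrm_ge0.
  have kk : 0 <= (p + q) / nrm w0 by apply: divr_ge0 => //; apply: ltW.
  exists (Num.sqrt ((p + q) / nrm w0) *: w0).
  rewrite nrmE !qformZ -nrmE sqr_sqrtr // divfK //; split => //.
  by split; rewrite mulrAC ler_pdivlMr.
have w00 := nrm_eq0 Nz.
have [a0|an0] := eqVneq a 0.
  have bn0 : b != 0.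
    apply/negP => /eqP b0; move: cs0; rewrite -ec -es a0 b0.
    by rewrite expr0n /= subr0 mulr0 eqxx; case.
  have z0 : z = 0.
    move: w00; rewrite /w0 a0 scale0r add0r => /eqP.
    by rewrite scaler_eq0 (negbTE bn0) /= => /eqP.
  exists y; rewrite /p /q /p1 /q1 /p2 /q2 z0 !qform0 (nrmE 0) !qform0 !addr0.
  by split => //; split; apply: lexx.
have ey : y = (- (b / a)) *: z.
  have e : a *: y = - (b *: z) by apply/eqP; rewrite -addr_eq0; apply/eqP.
  have yy : y = a^-1 *: (a *: y) by rewrite scalerK.
  by rewrite yy e scalerN scalerA scaleNr mulrC.
set g := - (b / a).
have g0 : 0 <= 1 + g^+2 by apply: addr_ge0 => //; apply: sqr_ge0.
exists (Num.sqrt (1 + g^+2) *: z).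
rewrite /p /p1 /p2 /q /q1 /q2 ey !nrmE !qformZ sqr_sqrtr //.
have E : forall t : R, (- (b / a))^+2 * t + t = (1 + g^+2) * t by move=> t; rewrite /g; ring.
by rewrite !E; split => //; split; apply: lexx.
Qed.

Lemma mx11_tr (R : realType) (M : 'M[R]_1) : M 0 0 = M^T 0 0.
Proof. by rewrite mxE. Qed.

Lemma bilZl (R : realType) n (A : 'M[R]_n) (x z : 'cV[R]_n) (c : R) :
  bil A (c *: x) z = c * bil A x z.
Proof. by rewrite /bil linearZ /= -!scalemxAl mxE. Qed.

Lemma qformB (R : realType) n (A B : 'M[R]_n) (x : 'cV[R]_n) :
  qform (A - B) x = qform A x - qform B x.
Proof. by rewrite /qform mulmxBr mulmxBl !mxE. Qed.

Lemma qform_rank1 (R : realType) n (y x : 'cV[R]_n) :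
  qform (y *m y^T) x = (bil 1%:M y x) ^+ 2.
Proof.
rewrite /qform /bil mulmx1 !mulmxA -mulmxA mxE big_ord1 expr2.
by rewrite mx11_tr trmx_mul trmxK.
Qed.

Lemma qform_delta (R : realType) n (X : 'M[R]_n) i : qform X (delta_mx i 0) = X i i.
Proof. exact: bil_delta. Qed.

Lemma psd_diag (R : realType) n (X : 'M[R]_n) i : psd X -> 0 <= X i i.
Proof. by case=> _ h; rewrite -qform_delta. Qed.

Lemma cs_zero (R : realType) n (X : 'M[R]_n) (u x : 'cV[R]_n) :
  psd X -> qform X u = 0 -> bil X u x = 0.
Proof.
case=> hs hp qu; apply/eqP/negPn/negP => bb.
set t := - (qform X x + 1) / (2 * bil X u x).
have := hp (t *: u + 1 *: x).
rewrite qform_comb qu (bil_sym x u hs) expr1n mul1r mulr1 mulr0 add0r.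
have -> : t * (bil X u x + bil X u x) = - (qform X x + 1).
  by rewrite /t; field.
lra.
Qed.

Lemma cs_pos (R : realType) n (X : 'M[R]_n) (u x : 'cV[R]_n) :
  psd X -> 0 < qform X u -> bil X u x ^+ 2 <= qform X u * qform X x.
Proof.
case=> hs hp qu.
set t := - bil X u x / qform X u.
have := hp (t *: u + 1 *: x).
rewrite qform_comb (bil_sym x u hs) expr1n mul1r mulr1.
have -> : t ^+ 2 * qform X u + t * (bil X u x + bil X u x) + qform X x =
   qform X x - bil X u x ^+ 2 / qform X u.
  by rewrite /t; field; rewrite gt_eqF.
rewrite subr_ge0 ler_pdivrMr //; lra.
Qed.

Lemma psd_zero (R : realType) n (X : 'M[R]_n) :
  psd X -> (forall i, X i i = 0) -> X = 0.
Proof.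
move=> hX h0; apply/matrixP => i j; rewrite mxE -bil_delta.
by apply: cs_zero => //; rewrite qform_delta.
Qed.

Lemma bil1_col (R : realType) n (X : 'M[R]_n) (e x : 'cV[R]_n) :
  X^T = X -> bil 1%:M (X *m e) x = bil X e x.
Proof. by move=> hs; rewrite /bil trmx_mul hs mulmx1. Qed.

Lemma tr_nrm (R : realType) n (y : 'cV[R]_n) : \tr (y *m y^T) = nrm y.
Proof. by rewrite -[y *m y^T]mul1mx tr_rank1 nrmE. Qed.

Lemma zero_case (R : realType) n (A1 A2 : 'M[R]_n) :
  exists w : 'cV[R]_n, nrm w = \tr (0 : 'M[R]_n) /\ \tr (A1 *m 0) <= qform A1 w /\
    \tr (A2 *m 0) <= qform A2 w.
Proof.
exists 0; rewrite nrmE !qform0 !mulmx0 mxtrace0; split => //; split; apply: lexx.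
Qed.

Lemma core (R : realType) n (A1 A2 : 'M[R]_n) (k : nat) : forall X : 'M[R]_n,
  (#|[pred i | X i i != 0%R]| <= k)%N -> psd X ->
  exists w : 'cV[R]_n, nrm w = \tr X /\ \tr (A1 *m X) <= qform A1 w /\
    \tr (A2 *m X) <= qform A2 w.
Proof.
elim: k => [|k IH] X hk hX.
  have -> : X = 0; last exact: zero_case.
  apply: psd_zero => // i; apply/eqP/negPn/negP => hi.
  move: hk; rewrite leqn0 => /eqP/card0_eq/(_ i) /=.
  by rewrite !inE hi.
case: (pickP [pred i | X i i != 0%R]) => [i /= hi | none]; last first.
  have -> : X = 0; last exact: zero_case.
  by apply: psd_zero => // i; apply/eqP; move: (none i) => /= /negbFE.
have [hs hp] := hX.
set p := X i i.
have pp : 0 < p by rewrite lt_neqAle eq_sym hi psd_diag.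
set e : 'cV[R]_n := delta_mx i 0.
set s := Num.sqrt p.
have s2 : s ^+ 2 = p by rewrite sqr_sqrtr // ltW.
have sn0 : s != 0 by rewrite sqrtr_eq0 -ltNge.
set y := s^-1 *: (X *m e).
set X' := X - y *m y^T.
have By x : bil 1%:M y x = s^-1 * bil X e x by rewrite bilZl bil1_col.
have Q' x : qform X' x = qform X x - bil X e x ^+ 2 / p.
  by rewrite qformB qform_rank1 By exprMn exprVn s2 mulrC.
have hX' : psd X'.
  split.
    by rewrite /X' /symmetric_mx raddfB /= trmx_mul trmxK hs.
  move=> x; rewrite Q' subr_ge0 ler_pdivrMr // mulrC.
  by have := @cs_pos R n X e x hX; rewrite /e qform_delta; apply.
have D' j : X' j j = X j j - X i j ^+ 2 / p by rewrite -!qform_delta Q' bil_delta.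
have hk' : (#|[pred j | X' j j != 0%R]| <= k)%N.
  rewrite -ltnS; apply: leq_trans hk; apply: proper_card; apply/properP; split.
    apply/fintype.subsetP => j /=; apply: contra => /eqP h0.
    apply/eqP/le_anti; rewrite psd_diag // andbT D' h0 sub0r oppr_le0.
    by apply: divr_ge0; [apply: sqr_ge0 | apply: ltW].
  exists i => //=; rewrite negbK D' /p; apply/eqP; by field.
have [w' [nw' [h1 h2]]] := IH X' hk' hX'.
have [w [nw [g1 g2]]] := two_vec A1 A2 w' y.
have eX : X = X' + y *m y^T by rewrite /X' subrK.
have t1 : \tr (A1 *m X) = \tr (A1 *m X') + qform A1 y.
  by rewrite {1}eX (mulmxDr A1 X' (y *m y^T)) mxtraceD tr_rank1.
have t2 : \tr (A2 *m X) = \tr (A2 *m X') + qform A2 y.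
  by rewrite {1}eX (mulmxDr A2 X' (y *m y^T)) mxtraceD tr_rank1.
have t0 : \tr X = \tr X' + nrm y by rewrite {1}eX mxtraceD tr_nrm.
exists w; rewrite t0 t1 t2 nw nw'; split => //.
by split; [apply: le_trans g1 | apply: le_trans g2]; rewrite lerD2r.
Qed.

Lemma tr_nonneg (R : realType) n (A X : 'M[R]_n) : psd A -> psd X -> 0 <= \tr (A *m X).
Proof.
move=> hA hX.
have [w [_ [g1 g2]]] := core A (- A) (leqnn _) hX.
move: g2; rewrite mulNmx raddfN /= qformN lerN2 => g2.
by apply: (le_trans _ g2); case: hA => _; apply.
Qed.

Unset Implicit Arguments.

Theorem mainTheorem6 (R : realType) (n : nat) (A1 A2 : 'M[R]_n) :
  psd A1 -> psd A2 -> Opt2 A1 A2 = OptSDP2 A1 A2.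
Proof.
move=> h1 h2; rewrite /Opt2 /OptSDP2 -sup_down -[X in _ = X]sup_down; congr sup.
apply/seteqP; split => r /downP [t [x hx <-] le_rt]; apply/downP.
  exists (Num.sqrt (qform A1 x * qform A2 x)) => //.
  exists (x *m x^T); last by rewrite !tr_rank1.
  split; last by rewrite tr_nrm.
  split; first by rewrite /symmetric_mx trmx_mul trmxK.
  by move=> z; rewrite qform_rank1 sqr_ge0.
case: hx => hX trX.
have [w [nw [g1 g2]]] := core A1 A2 (leqnn _) hX.
exists (Num.sqrt (qform A1 w * qform A2 w)).
  by exists w => //; rewrite /unit_vec; move: nw; rewrite /nrm trX.
apply: (le_trans le_rt); apply: ler_wsqrtr; apply: ler_pM => //;
  exact: tr_nonneg.
Qed.
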